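(* Fix an integer $N\ge 3$ and parameters $p_0,p_1,p_2,p_3\in(0,1)$, and set $q_m:=1-p_m$ for $m=0,1,2,3$. Let $\mu(p_0,p_1,p_2,p_3)$ denote the mean profit per turn of the cooperative Parrondo game $B$ with these parameters (defined in the context). Then $$\mu(p_0,p_1,p_2,p_3)=-\mu(q_3,q_2,q_1,q_0).$$ In particular, if $p_0+p_3=1$ and $p_1+p_2=1$, then $\mu(p_0,p_1,p_2,p_3)=0$.
   Context: Model (cooperative Parrondo game $B$): $N\ge 3$ players labeled $1,\ldots,N$ sit in a circle (indices mod $N$, so player $0$ is player $N$ and player $N+1$ is player $1$). The state space is $\Sigma=\{0,1\}^N$, where $x_i=1$ means player $i$ won his most recent game and $x_i=0$ means he lost. For $\bm x\in\Sigma$ let $m_i(\bm x):=2x_{i-1}+x_{i+1}\in\{0,1,2,3\}$ and let $\bm x^i$ be $\bm x$ with the $i$th coordinate replaced by $1-x_i$. At each turn a player $i$ is chosen uniformly at random and tosses a coin with heads probability $p_{m_i(\bm x)}$; heads means he wins one unit (and $x_i$ becomes $1$), tails means he loses one unit (and $x_i$ becomes $0$). Thus the status process is the Markov chain on $\Sigma$ with $P(\bm x,\bm x^i)=N^{-1}p_{m_i(\bm x)}$ if $x_i=0$, $P(\bm x,\bm x^i)=N^{-1}q_{m_i(\bm x)}$ if $x_i=1$, and $P(\bm x,\bm x)=N^{-1}\big(\sum_{i:x_i=0}q_{m_i(\bm x)}+\sum_{i:x_i=1}p_{m_i(\bm x)}\big)$. When all $p_m\in(0,1)$ this chain is irreducible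 and aperiodic with unique stationary distribution $\bm\pi$. The mean profit per turn is $$\mu(p_0,p_1,p_2,p_3):=\sum_{\bm x\in\Sigma}\pi(\bm x)\sum_{i=1}^N N^{-1}\big[p_{m_i(\bm x)}-q_{m_i(\bm x)}\big],$$ which equals the almost-sure limit of $S_n/n$, where $S_n$ is the cumulative profit of the ensemble of $N$ players after $n$ turns (for any initial distribution). *)

(* Defs.v *)
From mathcomp Require Import all_boot all_order all_algebra.
Set Implicit Arguments. Unset Strict Implicit. Unset Printing Implicit Defensive.
Import Order.TTheory GRing.Theory Num.Theory.
Local Open Scope ring_scope.

(* States of the cooperative Parrondo game B with N players:
   x : Sigma = {0,1}^N, players labelled by 'I_N (player k+1 of the paper is
   index k), x j = true  <->  x_j = 1. *)
Definition state (N : nat) := {ffun 'I_N -> bool}.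

Definition xat (N : nat) (x : state N) (k : nat) : bool :=
  [exists j : 'I_N, (nat_of_ord j == (k %% N)%N) && x j].

Definition mval (N : nat) (x : state N) (i : 'I_N) : nat :=
  (2 * xat x (i + N - 1) + xat x (i + 1))%N.

Definition coin {R : ringType} (p0 p1 p2 p3 : R) (m : nat) : R :=
  match m with 0 => p0 | 1 => p1 | 2 => p2 | _ => p3 end.

Definition flip (N : nat) (x : state N) (i : 'I_N) : state N :=
  [ffun j => if j == i then ~~ x i else x j].

Definition trans {R : fieldType} (N : nat) (p0 p1 p2 p3 : R)
    (x y : state N) : R :=
  let p i := coin p0 p1 p2 p3 (mval x i) in
  let q i := 1 - p i in
  \sum_(i < N) (if y == flip x i then (N%:R)^-1 * (if x i then q i else p i)
                else 0)
  + (if y == x then (N%:R)^-1 *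
        (\sum_(i < N | ~~ x i) q i + \sum_(i < N | x i) p i) else 0).

Definition stationary {R : numFieldType} (N : nat) (p0 p1 p2 p3 : R)
    (pi : {ffun state N -> R}) : Prop :=
  (forall x, 0 <= pi x) /\ \sum_x pi x = 1 /\
  (forall y, pi y = \sum_x pi x * trans p0 p1 p2 p3 x y).

Definition mu {R : fieldType} (N : nat) (p0 p1 p2 p3 : R)
    (pi : {ffun state N -> R}) : R :=
  \sum_x pi x * \sum_(i < N) (N%:R)^-1 *
     (coin p0 p1 p2 p3 (mval x i) - (1 - coin p0 p1 p2 p3 (mval x i))).

(* Main.v *)
Require Import Defs.
From mathcomp Require Import all_boot all_order all_algebra.
From mathcomp Require Import ring lra.
Import Order.TTheory GRing.Theory Num.Theory.
Local Open Scope ring_scope.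

Section Uniq.
Variables (R : realFieldType) (T : finType) (P : T -> T -> R) (E : T -> T -> Prop).
Hypothesis P_ge0 : forall x y, 0 <= P x y.
Hypothesis P_row : forall x, \sum_y P x y = 1.
Hypothesis E_pos : forall x y, E x y -> 0 < P x y.
Hypothesis E_conn : forall Q : T -> Prop, (forall x y, E x y -> Q x -> Q y) ->
   forall x y, Q x -> Q y.

Lemma key_le0 (d : T -> R) : (forall y, d y = \sum_x d x * P x y) ->
  \sum_x d x = 0 -> forall x, d x <= 0.
Proof.
move=> hd hs.
pose dp x := Num.max (d x) 0.
have dp_ge0 x : 0 <= dp x by rewrite /dp le_max lexx orbT.
have d_dp x : d x <= dp x by rewrite /dp le_max lexx.
have hle y : dp y <= \sum_x dp x * P x y.
  rewrite {1}/dp ge_max; apply/andP; split.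
    rewrite hd; apply: ler_sum => x _; apply: ler_wpM2r => //.
  by apply: sumr_ge0 => x _; apply: mulr_ge0.
have htot : \sum_y (\sum_x dp x * P x y - dp y) = 0.
  rewrite sumrB exchange_big /=.
  under eq_bigr => x _ do rewrite -mulr_sumr P_row mulr1.
  by rewrite subrr.
have heq y : \sum_x dp x * P x y = dp y.
  apply/eqP; rewrite -subr_eq0; apply/eqP.
  by move/psumr_eq0P: htot => ->// z _; rewrite subr_ge0.
move=> x0; rewrite leNgt; apply/negP => hx0.
have all_pos : forall y, 0 < d y.
  move=> y; apply: (@E_conn (fun z => 0 < d z) _ x0 y hx0) => x y' hE hx.
  rewrite ltNge; apply/negP => hy.
  have : dp y' = 0 by rewrite /dp max_r.
  rewrite -heq => /eqP; rewrite psumr_eq0; last by move=> z _; apply: mulr_ge0.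
  move/allP => /(_ x (mem_index_enum x)) /=.
  rewrite mulf_eq0 => /orP[]/eqP h.
    by move: h; rewrite /dp max_l ?ltW // => h; rewrite h ltxx in hx.
  by have := E_pos _ _ hE; rewrite h ltxx.
have : 0 < \sum_x d x.
  rewrite (bigD1 x0) //=; apply: (lt_le_trans hx0); rewrite lerDl.
  by apply: sumr_ge0 => z _; apply: ltW; apply: all_pos.
by rewrite hs ltxx.
Qed.

Lemma stat_unique (pi1 pi2 : T -> R) :
  (forall y, pi1 y = \sum_x pi1 x * P x y) -> \sum_x pi1 x = 1 ->
  (forall y, pi2 y = \sum_x pi2 x * P x y) -> \sum_x pi2 x = 1 ->
  forall x, pi1 x = pi2 x.
Proof.
move=> h1 s1 h2 s2 x.
have hd : forall y, (pi1 y - pi2 y) = \sum_x (pi1 x - pi2 x) * P x y.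
  by move=> y; rewrite (h1 y) (h2 y) -sumrB; apply: eq_bigr => z _; rewrite mulrBl -?h1 -?h2.
have hs : \sum_x (pi1 x - pi2 x) = 0 by rewrite sumrB s1 s2 subrr.
have a := @key_le0 (fun z => pi1 z - pi2 z) hd hs x.
have hd' : forall y, (pi2 y - pi1 y) = \sum_x (pi2 x - pi1 x) * P x y.
  by move=> y; rewrite (h1 y) (h2 y) -sumrB; apply: eq_bigr => z _; rewrite mulrBl.
have hs' : \sum_x (pi2 x - pi1 x) = 0 by rewrite sumrB s1 s2 subrr.
have b := @key_le0 (fun z => pi2 z - pi1 z) hd' hs' x.
lra.
Qed.
End Uniq.

Definition comp {N : nat} (x : state N) : state N := [ffun j => ~~ x j].

Lemma compK N : involutive (@comp N).
Proof. by move=> x; apply/ffunP => j; rewrite !ffunE negbK. Qed.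

Lemma comp_inj N : injective (@comp N).
Proof. exact: inv_inj (@compK N). Qed.

Lemma xatE {N} (x : state N) k (hN : (0 < N)%N) :
  xat x k = x (Ordinal (ltn_pmod k hN)).
Proof.
rewrite /xat; apply/existsP/idP.
  case=> j /andP[/eqP hj xj].
  by have -> : Ordinal (ltn_pmod k hN) = j by apply: val_inj.
by move=> h; exists (Ordinal (ltn_pmod k hN)); rewrite eqxx.
Qed.

Lemma xat_comp {N} (x : state N) k : (0 < N)%N -> xat (comp x) k = ~~ xat x k.
Proof. by move=> hN; rewrite !(xatE _ _ hN) ffunE. Qed.

Lemma coin_comp (R : ringType) N (p0 p1 p2 p3 : R) (x : state N) i :
  (0 < N)%N ->
  coin (1 - p3) (1 - p2) (1 - p1) (1 - p0) (mval (comp x) i) =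
  1 - coin p0 p1 p2 p3 (mval x i).
Proof.
move=> hN; rewrite /mval !(xat_comp _ _ hN).
by case: (xat x _); case: (xat x _).
Qed.

Lemma flip_comp {N} (x : state N) i : flip (comp x) i = comp (flip x i).
Proof. by apply/ffunP => j; rewrite !ffunE; case: eqP => // ->; rewrite !ffunE. Qed.

Lemma trans_comp (R : fieldType) N (p0 p1 p2 p3 : R) (x y : state N) :
  (0 < N)%N ->
  trans (1 - p3) (1 - p2) (1 - p1) (1 - p0) (comp x) (comp y) =
  trans p0 p1 p2 p3 x y.
Proof.
move=> hN; rewrite /trans /=.
congr (_ + _).
  apply: eq_bigr => i _; rewrite flip_comp (inj_eq (@comp_inj N)) coin_comp // ffunE.
  by case: (x i); rewrite //= subKr.
rewrite (inj_eq (@comp_inj N)); case: (y == x) => //.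
rewrite addrC; congr (_ * (_ + _)).
  apply: eq_big => i; first by rewrite ffunE.
  by move=> _; rewrite coin_comp.
apply: eq_big => i; first by rewrite ffunE negbK.
by move=> _; rewrite coin_comp // subKr.
Qed.

Section Chain.
Variables (R : realFieldType) (N : nat) (p0 p1 p2 p3 : R).
Hypotheses (hN : (0 < N)%N) (h0 : 0 < p0 < 1) (h1 : 0 < p1 < 1)
  (h2 : 0 < p2 < 1) (h3 : 0 < p3 < 1).

Lemma coin_bd m : 0 < coin p0 p1 p2 p3 m < 1.
Proof. by case: m => [|[|[|m]]]. Qed.

Lemma coin_ge0 m : 0 <= coin p0 p1 p2 p3 m.
Proof. by case/andP: (coin_bd m) => /ltW. Qed.

Lemma coin_le1 m : 0 <= 1 - coin p0 p1 p2 p3 m.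
Proof. by case/andP: (coin_bd m) => _ /ltW; rewrite subr_ge0. Qed.

Lemma Ninv_gt0 : 0 < (N%:R : R)^-1.
Proof. by rewrite invr_gt0 ltr0n. Qed.

Lemma trans_ge0 (x y : state N) : 0 <= trans p0 p1 p2 p3 x y.
Proof.
have hi := ltW Ninv_gt0.
rewrite /trans /=; apply: addr_ge0.
  apply: sumr_ge0 => i _; case: eqP => // _; apply: mulr_ge0 => //.
  by case: (x i); rewrite ?coin_ge0 ?coin_le1.
case: eqP => // _; apply: mulr_ge0 => //; apply: addr_ge0; apply: sumr_ge0 => i _.
  exact: coin_le1.
exact: coin_ge0.
Qed.

Lemma sum_ite (T : finType) (z : T) (c : R) :
  \sum_(y : T) (if y == z then c else 0) = c.
Proof. by rewrite -big_mkcond big_pred1_eq. Qed.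

Lemma trans_row (x : state N) : \sum_y trans p0 p1 p2 p3 x y = 1.
Proof.
rewrite /trans /= big_split /= exchange_big /=.
under eq_bigr => i _ do rewrite sum_ite.
rewrite sum_ite -mulr_sumr -mulrDr big_mkcond [X in _ + (X + _)]big_mkcond /=.
rewrite [X in _ + (_ + X)]big_mkcond /= -!big_split /=.
rewrite (eq_bigr (fun _ => 1)); last first.
  by move=> i _; case: (x i) => /=; ring.
by rewrite sumr_const card_ord mulVf // pnatr_eq0 -lt0n.
Qed.

Lemma trans_flip (x : state N) i : 0 < trans p0 p1 p2 p3 x (flip x i).
Proof.
rewrite /trans /=.
have -> : (flip x i == x) = false.
  apply/negbTE/eqP => /ffunP /(_ i); rewrite ffunE eqxx; by case: (x i).
rewrite addr0 (bigD1 i) //= eqxx big1 ?addr0.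
  apply: mulr_gt0; first exact: Ninv_gt0.
  by case: (x i); case/andP: (coin_bd (mval x i)) => // _; rewrite subr_gt0.
move=> j hj; case: eqP => // /ffunP /(_ i); rewrite !ffunE eqxx.
by rewrite eq_sym (negbTE hj); case: (x i).
Qed.
End Chain.

Lemma state_conn N (Q : state N -> Prop) :
  (forall x i, Q x -> Q (flip x i)) -> forall x y, Q x -> Q y.
Proof.
move=> hQ x y.
move: {2}#|[set i | x i != y i]| (erefl #|[set i | x i != y i]|) => n.
elim: n x => [|n IH] x hn hx.
  suff -> : y = x by [].
  apply/ffunP => j; apply/eqP; rewrite eq_sym; apply/negPn/negP => hj.
  by move: hn; rewrite (cardsD1 j) inE hj.
have : (0 < #|[set i | x i != y i]|)%N by rewrite hn.
case/card_gt0P => i hi.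
apply: (IH (flip x i)); last exact: hQ.
have -> : [set j | flip x i j != y j] = [set j | x j != y j] :\ i.
  apply/setP => j; rewrite !inE ffunE.
  case: (eqVneq j i) => [->|] //=.
  by move: hi; rewrite inE; case: (x i); case: (y i).
by move: hn; rewrite (cardsD1 i) hi => -[].
Qed.

Lemma part1 (R : realFieldType) (N : nat) (p0 p1 p2 p3 : R)
    (pi pi' : {ffun state N -> R}) :
  (3 <= N)%N ->
  0 < p0 < 1 -> 0 < p1 < 1 -> 0 < p2 < 1 -> 0 < p3 < 1 ->
  stationary p0 p1 p2 p3 pi ->
  stationary (1 - p3) (1 - p2) (1 - p1) (1 - p0) pi' ->
  mu p0 p1 p2 p3 pi = - mu (1 - p3) (1 - p2) (1 - p1) (1 - p0) pi'.
Proof.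
move=> hN3 h0 h1 h2 h3 [_ [s1 st1]] [_ [s2 st2]].
have hN : (0 < N)%N by apply: leq_trans hN3.
have ci := @comp_inj N.
have hu : forall x, pi x = pi' (comp x).
  apply: (@stat_unique R (state N) (trans p0 p1 p2 p3)
            (fun x y => exists i, y = flip x i)).
  - exact: trans_ge0.
  - exact: trans_row.
  - by move=> x y [i ->]; apply: trans_flip.
  - move=> Q hQ x y; apply: state_conn => z i; apply: hQ; by exists i.
  - exact: st1.
  - exact: s1.
  - move=> y; rewrite st2 (reindex_inj ci) /=.
    by apply: eq_bigr => z _; rewrite trans_comp.
  - by rewrite -s2 [RHS](reindex_inj ci).
rewrite /mu [X in _ = - X](reindex_inj ci) /= -sumrN.
apply: eq_bigr => x _; rewrite -hu -mulrN -sumrN; congr (_ * _).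
apply: eq_bigr => i _; rewrite coin_comp //.
ring.
Qed.

Theorem corollary1 (R : realFieldType) (N : nat) (p0 p1 p2 p3 : R)
    (pi pi' : {ffun state N -> R}) :
  (3 <= N)%N ->
  0 < p0 < 1 -> 0 < p1 < 1 -> 0 < p2 < 1 -> 0 < p3 < 1 ->
  stationary p0 p1 p2 p3 pi ->
  stationary (1 - p3) (1 - p2) (1 - p1) (1 - p0) pi' ->
  mu p0 p1 p2 p3 pi = - mu (1 - p3) (1 - p2) (1 - p1) (1 - p0) pi' /\
  (p0 + p3 = 1 -> p1 + p2 = 1 -> mu p0 p1 p2 p3 pi = 0).
Proof.
move=> hN3 h0 h1 h2 h3 st st'.
split; first exact: part1.
move=> e03 e12.
have E3 : 1 - p3 = p0 by lra.
have E2 : 1 - p2 = p1 by lra.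
have E1 : 1 - p1 = p2 by lra.
have E0 : 1 - p0 = p3 by lra.
have := @part1 R N p0 p1 p2 p3 pi pi hN3 h0 h1 h2 h3 st; rewrite E3 E2 E1 E0 => /(_ st).
by move=> h; lra.
Qed.
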